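(* Assume Schanuel's conjecture $(S)$. Then the numbers $\sqrt{2}^{\,\sqrt{2}^{\,\sqrt{2}}}$, $i^{\,i^{\,i}}$, and $i^{\,e^{\pi}}$ are transcendental.
   Context: Schanuel's conjecture $(S)$: if $\alpha_1,\dots,\alpha_n\in\mathbb{C}$ are linearly independent over $\mathbb{Q}$, then the transcendence degree of $\mathbb{Q}(\alpha_1,\dots,\alpha_n,e^{\alpha_1},\dots,e^{\alpha_n})$ over $\mathbb{Q}$ is at least $n$. Here $i=\sqrt{-1}$, towers are read from the top ($a^{b^{c}}=a^{(b^c)}$), and complex powers use the principal logarithm, $a^b=e^{b\,\mathrm{Log}\,a}$ (so $\mathrm{Log}\, i=\pi i/2$). *)

(* Defs.v *)
From Stdlib Require Import Reals QArith Qreals List.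
Open Scope R_scope.

Definition C : Type := (R * R)%type.

Definition Cre (z : C) : R := fst z.
Definition Cim (z : C) : R := snd z.
Definition C0 : C := (0, 0).
Definition C1 : C := (1, 0).
Definition Ci : C := (0, 1).
Definition RtoC (x : R) : C := (x, 0).
Definition Cadd (z w : C) : C := (Cre z + Cre w, Cim z + Cim w).
Definition Cmul (z w : C) : C :=
  (Cre z * Cre w - Cim z * Cim w, Cre z * Cim w + Cim z * Cre w).
Fixpoint Cpow_nat (z : C) (n : nat) : C :=
  match n with O => C1 | S k => Cmul z (Cpow_nat z k) end.

Definition Cexp (z : C) : C :=
  (exp (Cre z) * cos (Cim z), exp (Cre z) * sin (Cim z)).

Definition Cmod (z : C) : R := sqrt (Cre z * Cre z + Cim z * Cim z).

(** principal argument, with values in (-PI, PI] *)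
Definition Carg (z : C) : R :=
  let x := Cre z in let y := Cim z in
  if Rlt_dec 0 x then atan (y / x)
  else if Rlt_dec x 0 then
    (if Rle_dec 0 y then atan (y / x) + PI else atan (y / x) - PI)
  else
    if Rlt_dec 0 y then PI / 2
    else if Rlt_dec y 0 then - (PI / 2) else 0.

Definition CLog (z : C) : C := (ln (Cmod z), Carg z).

Definition Cpow (a b : C) : C := Cexp (Cmul b (CLog a)).

(** A polynomial in [n] variables is a finite list of terms (coefficient,
    exponent vector). *)
Definition qpoly : Type := list (Q * list nat).

Definition mono_eval (m : list nat) (xs : list C) : C :=
  fold_right Cmul C1 (map (fun ex => Cpow_nat (snd ex) (fst ex)) (combine m xs)).

Definition qpoly_eval (p : qpoly) (xs : list C) : C :=
  fold_right Cadd C0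
    (map (fun t => Cmul (RtoC (Q2R (fst t))) (mono_eval (snd t) xs)) p).

(** well-formed polynomial in n variables: exponent vectors of length n,
    pairwise distinct monomials (so the list is the coefficient representation) *)
Definition qpoly_wf (n : nat) (p : qpoly) : Prop :=
  Forall (fun t => length (snd t) = n) p /\ NoDup (map snd p).

Definition qpoly_nonzero (p : qpoly) : Prop :=
  exists t, In t p /\ ~ (fst t == 0)%Q.

Definition alg_indep (ys : list C) : Prop :=
  forall p, qpoly_wf (length ys) p -> qpoly_nonzero p -> qpoly_eval p ys <> C0.

Definition in_field_gen (xs : list C) (z : C) : Prop :=
  exists P Qd, qpoly_wf (length xs) P /\ qpoly_wf (length xs) Qd /\
    qpoly_eval Qd xs <> C0 /\ Cmul z (qpoly_eval Qd xs) = qpoly_eval P xs.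

Definition trdeg_ge (xs : list C) (n : nat) : Prop :=
  exists ys, length ys = n /\ Forall (in_field_gen xs) ys /\ alg_indep ys.

Definition Q_lin_indep (alphas : list C) : Prop :=
  forall qs : list Q, length qs = length alphas ->
    fold_right Cadd C0 (map (fun qa => Cmul (RtoC (Q2R (fst qa))) (snd qa))
                            (combine qs alphas)) = C0 ->
    Forall (fun q => (q == 0)%Q) qs.

Definition transcendental (z : C) : Prop :=
  forall p, qpoly_wf 1 p -> qpoly_nonzero p -> qpoly_eval p (z :: nil) <> C0.

Definition Schanuel : Prop :=
  forall alphas : list C, Q_lin_indep alphas ->
    trdeg_ge (alphas ++ map Cexp alphas) (length alphas).

Definition Csqrt2 : C := RtoC (sqrt 2).

(* Main.v *)
Require Import Defs.
From Stdlib Require Import Reals.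
Open Scope R_scope.
From Stdlib Require Import QArith Qreals List Lra Lia Psatz Classical Permutation ZArith.
Import Defs.
Open Scope R_scope.

Definition Copp (z : C) : C := (- Cre z, - Cim z).

Lemma Cring_th : ring_theory C0 C1 Cadd Cmul (fun a b => Cadd a (Copp b)) Copp (@eq C).
Proof.
  constructor; intros; repeat match goal with z : C |- _ => destruct z end;
  unfold Cadd, Cmul, Copp, C0, C1, Cre, Cim; simpl; f_equal; ring.
Qed.
Add Ring Cring : Cring_th.

Definition Qc (q : Q) : C := RtoC (Q2R q).

Lemma Cpow_add a m n : Cpow_nat a (m + n) = Cmul (Cpow_nat a m) (Cpow_nat a n).
Proof. induction m; simpl. ring. rewrite IHm; ring. Qed.

Lemma Cpow_mul a b n : Cpow_nat (Cmul a b) n = Cmul (Cpow_nat a n) (Cpow_nat b n).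
Proof. induction n; simpl. unfold C1, Cmul, Cre, Cim; simpl; f_equal; ring. rewrite IHn; ring. Qed.

Lemma Cmul_integral z w : Cmul z w = C0 -> z = C0 \/ w = C0.
Proof.
  destruct z as [a b], w as [c d]; unfold Cmul, C0, Cre, Cim; simpl; intro H.
  injection H as H1 H2.
  assert (Hp : (a*a+b*b)*(c*c+d*d) = 0) by nra.
  apply Rmult_integral in Hp as [Hp|Hp]; [left|right]; f_equal; nra.
Qed.

Lemma Cpow_nz a n : a <> C0 -> Cpow_nat a n <> C0.
Proof.
  intro Ha; induction n; simpl.
  - unfold C1, C0; intro H; injection H; lra.
  - intro H; apply Cmul_integral in H; tauto.
Qed.

Lemma Qc_plus p q : Qc (p + q) = Cadd (Qc p) (Qc q).
Proof. unfold Qc, RtoC, Cadd; simpl; rewrite Q2R_plus; f_equal; ring. Qed.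
Lemma Qc_mult p q : Qc (p * q) = Cmul (Qc p) (Qc q).
Proof. unfold Qc, RtoC, Cmul; simpl; rewrite Q2R_mult; f_equal; ring. Qed.
Lemma Qc_opp p : Qc (- p) = Copp (Qc p).
Proof. unfold Qc, RtoC, Copp; simpl; rewrite Q2R_opp; f_equal; ring. Qed.
Lemma Qc_0 : Qc 0 = C0.
Proof. unfold Qc, RtoC, C0, Q2R; simpl; f_equal; ring. Qed.
Lemma Qc_1 : Qc 1 = C1.
Proof. unfold Qc, RtoC, C1, Q2R; simpl; f_equal; field. Qed.
Lemma Q2R_nz q : ~ q == 0 -> Q2R q <> 0.
Proof. intros H E; apply H, eqR_Qeq; rewrite E; unfold Q2R; simpl; ring. Qed.

Inductive Span (L : list C) : C -> Prop :=
| sp0 : Span L C0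
| spS : forall q v x, In v L -> Span L x -> Span L (Cadd (Cmul (Qc q) v) x).

Lemma span_eq L x y : Span L x -> x = y -> Span L y.
Proof. intros; subst; auto. Qed.

Lemma span_in L v : In v L -> Span L v.
Proof.
  intro H. apply span_eq with (Cadd (Cmul (Qc 1) v) C0). constructor; auto. constructor.
  rewrite Qc_1; ring.
Qed.

Lemma span_add L x y : Span L x -> Span L y -> Span L (Cadd x y).
Proof.
  intros Hx Hy; induction Hx. apply span_eq with y; auto; ring.
  eapply span_eq. constructor 2 with (q:=q) (v:=v) (x:=Cadd x y); auto. ring.
Qed.

Lemma span_scale L q x : Span L x -> Span L (Cmul (Qc q) x).
Proof.
  intros Hx; induction Hx. apply span_eq with C0; [constructor|ring].
  eapply span_eq. constructor 2 with (q:=(q*q0)%Q) (v:=v) (x:=Cmul (Qc q) x); auto.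
  rewrite Qc_mult; ring.
Qed.

Lemma span_opp L x : Span L x -> Span L (Copp x).
Proof.
  intro H; apply span_eq with (Cmul (Qc (- (1))) x). apply span_scale; auto.
  rewrite Qc_opp, Qc_1; ring.
Qed.

Lemma span_incl L L' x : incl L L' -> Span L x -> Span L' x.
Proof. intros Hi H; induction H; constructor; auto. Qed.

Lemma span_cmul L c x : Span L x -> Span (map (Cmul c) L) (Cmul c x).
Proof.
  intro H; induction H. apply span_eq with C0; [constructor|ring].
  eapply span_eq. constructor 2 with (q:=q) (v:=Cmul c v) (x:=Cmul c x); auto.
  apply in_map; auto. ring.
Qed.

Lemma span_mul L1 L2 L3 x y :
  (forall s t, In s L1 -> In t L2 -> Span L3 (Cmul s t)) ->
  Span L1 x -> Span L2 y -> Span L3 (Cmul x y).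
Proof.
  intros H Hx Hy; induction Hx.
  - apply span_eq with C0; [constructor|ring].
  - apply span_eq with (Cadd (Cmul (Qc q) (Cmul v y)) (Cmul x y)); [|ring].
    apply span_add; auto. apply span_scale.
    clear IHHx. induction Hy. apply span_eq with C0; [constructor|ring].
    apply span_eq with (Cadd (Cmul (Qc q0) (Cmul v v0)) (Cmul v x0)); [|ring].
    apply span_add; auto. apply span_scale; auto.
Qed.

Lemma span_nil x : Span nil x -> x = C0.
Proof. intro H; inversion H; auto. contradiction. Qed.

Lemma span_cons_dec w L x : Span (w :: L) x ->
  exists q x', Span L x' /\ x = Cadd (Cmul (Qc q) w) x'.
Proof.
  intro H; induction H.
  - exists 0%Q, C0; split; [constructor|]. rewrite Qc_0; ring.
  - destruct IHSpan as [q' [x' [H1 H2]]]. destruct H as [H|H].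
    + subst. exists (q + q')%Q, x'; split; auto. rewrite Qc_plus; ring.
    + exists q', (Cadd (Cmul (Qc q) v) x'); split. constructor; auto. subst; ring.
Qed.


Definition lincomb (qs : list Q) (vs : list C) : C :=
  fold_right Cadd C0 (map (fun qa => Cmul (Qc (fst qa)) (snd qa)) (combine qs vs)).

Lemma lincomb_cons q qs v vs : lincomb (q :: qs) (v :: vs) = Cadd (Cmul (Qc q) v) (lincomb qs vs).
Proof. reflexivity. Qed.

Lemma lincomb_app q1 q2 v1 v2 : length q1 = length v1 ->
  lincomb (q1 ++ q2) (v1 ++ v2) = Cadd (lincomb q1 v1) (lincomb q2 v2).
Proof.
  revert v1; induction q1; intros [|v v1] H; simpl in *; try discriminate.
  - unfold lincomb at 2; simpl; ring.
  - rewrite !lincomb_cons, IHq1 by lia; ring.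
Qed.

Definition dep (vs : list C) : Prop :=
  exists qs, length qs = length vs /\ Exists (fun q => ~ (q == 0)%Q) qs /\ lincomb qs vs = C0.

Lemma dep_swap a b : dep (b ++ a) -> dep (a ++ b).
Proof.
  intros [qs [Hl [Hn Hc]]].
  rewrite length_app in Hl.
  exists (skipn (length b) qs ++ firstn (length b) qs).
  assert (E : qs = firstn (length b) qs ++ skipn (length b) qs) by (symmetry; apply firstn_skipn).
  assert (L1 : length (firstn (length b) qs) = length b) by (rewrite length_firstn; lia).
  assert (L2 : length (skipn (length b) qs) = length a) by (rewrite length_skipn; lia).
  split; [rewrite length_app, length_app; lia|split].
  - rewrite E in Hn. apply Exists_app in Hn. apply Exists_app. tauto.
  - rewrite lincomb_app by auto. rewrite E, lincomb_app in Hc by auto. rewrite <- Hc; ring.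
Qed.

Definition sub_list (rest : list C) (rs : list Q) (v : C) : list C :=
  map (fun ur => Cadd (fst ur) (Copp (Cmul (Qc (snd ur)) v))) (combine rest rs).

Definition qdot (qs rs : list Q) : Q :=
  fold_right Qplus 0%Q (map (fun p => (fst p * snd p)%Q) (combine qs rs)).

Lemma lincomb_sub qs rest rs v : length qs = length rest -> length rest = length rs ->
  lincomb qs (sub_list rest rs v) = Cadd (lincomb qs rest) (Copp (Cmul (Qc (qdot qs rs)) v)).
Proof.
  revert rest rs; induction qs; intros [|u rest] [|r rs] H1 H2; simpl in *; try discriminate.
  - unfold lincomb, qdot; simpl. rewrite Qc_0; ring.
  - change (sub_list (u :: rest) (r :: rs) v) with
      (Cadd u (Copp (Cmul (Qc r) v)) :: sub_list rest rs v).
    rewrite lincomb_cons.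
    rewrite IHqs by lia. rewrite lincomb_cons. unfold qdot; simpl. fold (qdot qs rs).
    rewrite Qc_plus, Qc_mult; ring.
Qed.

Lemma reduce w W v c v' rest : v = Cadd (Cmul (Qc c) w) v' -> ~ (c == 0)%Q -> Span W v' ->
  Forall (Span (w :: W)) rest ->
  exists rs, length rs = length rest /\ Forall (Span W) (sub_list rest rs v).
Proof.
  intros Hv Hc Hv' HF; induction HF.
  - exists nil; split; simpl; auto.
  - destruct IHHF as [rs [Hl HF2]].
    apply span_cons_dec in H as [q [x' [Hx' Hx]]].
    exists ((q / c)%Q :: rs); split; simpl; auto.
    constructor; auto.
    apply span_eq with (Cadd x' (Copp (Cmul (Qc (q / c)) v'))).
    apply span_add; auto. apply span_opp, span_scale; auto.
    subst. cbn [fst snd]. unfold Qdiv. rewrite Qc_mult.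
    assert (E : Cmul (Qc q) w = Cmul (Cmul (Qc q) (Qc (/ c))) (Cmul (Qc c) w)).
    { unfold Qc, RtoC, Cmul, Cre, Cim; simpl. rewrite Q2R_inv by auto.
      pose proof (Q2R_nz c Hc). f_equal; field; auto. }
    rewrite E. ring.
Qed.

Lemma dep_nil vs : vs <> nil -> Forall (Span nil) vs -> dep vs.
Proof.
  intros Hne HF. exists (repeat 1%Q (length vs)). split; [apply repeat_length|split].
  - destruct vs; [congruence|]. simpl. constructor. discriminate.
  - clear Hne. induction HF; auto. simpl. rewrite lincomb_cons, IHHF.
    apply span_nil in H; subst; ring.
Qed.

Lemma dep_main : forall W vs, (length W < length vs)%nat -> Forall (Span W) vs -> dep vs.
Proof.
  induction W as [|w W IH]; intros vs Hl HF.
  - apply dep_nil; auto. intro; subst; simpl in Hl; lia.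
  - destruct (classic (Forall (Span W) vs)) as [HW|HW].
    + apply IH; simpl in Hl; auto; lia.
    + apply Exists_Forall_neg in HW; [|intros; tauto].
      apply Exists_exists in HW as [v [Hin Hnv]].
      apply in_split in Hin as [pre [post Heq]]. subst vs.
      apply dep_swap. simpl.
      rewrite Forall_app in HF; destruct HF as [HF1 HF2]; inversion HF2; subst.
      destruct (span_cons_dec _ _ _ H1) as [c [v' [Hv' Hv]]].
      assert (Hc : ~ (c == 0)%Q).
      { intro Hc0. apply Hnv. apply span_eq with v'; auto. rewrite Hv.
        unfold Qc; rewrite (Qeq_eqR _ _ Hc0). unfold Q2R, RtoC, Cmul, Cadd, Cre, Cim; simpl.
        destruct w, v'; simpl; f_equal; ring. }
      assert (HFr : Forall (Span (w :: W)) (post ++ pre)) by (apply Forall_app; auto).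
      destruct (reduce w W v c v' (post ++ pre) Hv Hc Hv' HFr) as [rs [Hrs HFs]].
      assert (Hlen : length (sub_list (post ++ pre) rs v) = length (post ++ pre)).
      { unfold sub_list; rewrite length_map, length_combine; lia. }
      destruct (IH _ ltac:(rewrite Hlen; rewrite !length_app in *; simpl in *; lia) HFs)
        as [qs [Hq1 [Hq2 Hq3]]].
      exists ((- qdot qs rs)%Q :: qs). split; [simpl; lia|split].
      * constructor 2; auto.
      * rewrite lincomb_cons. rewrite lincomb_sub in Hq3 by lia.
        rewrite Qc_opp.
        transitivity (Cadd (lincomb qs (post ++ pre)) (Copp (Cmul (Qc (qdot qs rs)) v))).
        ring. exact Hq3.
Qed.


Definition alg (A : list C) : Prop :=
  Span A C1 /\ forall s t, In s A -> In t A -> Span A (Cmul s t).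

Fixpoint mons (bs A : list C) (D : nat) : list C :=
  match bs with
  | nil => A
  | b :: bs' => flat_map (fun j => map (Cmul (Cpow_nat b j)) (mons bs' A D)) (seq 0 (S D))
  end.

Lemma mons_len bs A D : length (mons bs A D) = (S D ^ length bs * length A)%nat.
Proof.
  induction bs as [|b bs IH]; [simpl; lia|]. cbn [mons length].
  rewrite (flat_map_constant_length (c := (S D ^ length bs * length A)%nat)).
  rewrite length_seq; simpl; lia.
  intros; rewrite length_map; auto.
Qed.

Lemma in_mons_cons b bs A D x :
  In x (mons (b :: bs) A D) <-> exists j y, (j <= D)%nat /\ In y (mons bs A D) /\ x = Cmul (Cpow_nat b j) y.
Proof.
  cbn [mons]. rewrite in_flat_map. split.
  - intros [j [Hj Hx]]. apply in_seq in Hj. apply in_map_iff in Hx as [y [Hy1 Hy2]].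
    exists j, y; repeat split; auto; lia.
  - intros [j [y [Hj [Hy Hx]]]]. exists j; split. apply in_seq; lia.
    apply in_map_iff; eauto.
Qed.

Lemma mons_mono bs A D D' : (D <= D')%nat -> incl (mons bs A D) (mons bs A D').
Proof.
  intros HD; induction bs; intros x Hx. auto.
  apply in_mons_cons in Hx as [j [y [Hj [Hy Hx]]]].
  apply in_mons_cons. exists j, y; repeat split; auto; lia.
Qed.

Definition V bs A D x := Span (mons bs A D) x.

Lemma mons_mul bs A E F : alg A -> forall s t, In s (mons bs A E) -> In t (mons bs A F) ->
  V bs A (E + F) (Cmul s t).
Proof.
  intros HA; induction bs; intros s t Hs Ht; unfold V.
  - apply HA; auto.
  - 
    apply in_mons_cons in Hs as [j [y [Hj [Hy Hs]]]].
    apply in_mons_cons in Ht as [k [z [Hk [Hz Ht]]]].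
    subst. apply span_eq with (Cmul (Cpow_nat a (j + k)) (Cmul y z)).
    2: rewrite Cpow_add; ring.
    apply span_incl with (map (Cmul (Cpow_nat a (j + k))) (mons bs A (E + F))).
    + intros x Hx. apply in_map_iff in Hx as [u [Hu1 Hu2]]. apply in_mons_cons.
      exists (j + k)%nat, u; repeat split; auto; lia.
    + apply span_cmul. apply IHbs; auto.
Qed.

Lemma V_mul bs A E F x y : alg A -> V bs A E x -> V bs A F y -> V bs A (E + F) (Cmul x y).
Proof. intros HA Hx Hy. eapply span_mul; eauto. intros; apply mons_mul; auto. Qed.

Lemma V_mono bs A D D' x : (D <= D')%nat -> V bs A D x -> V bs A D' x.
Proof. intros; eapply span_incl; eauto; apply mons_mono; auto. Qed.

Lemma V_add bs A D x y : V bs A D x -> V bs A D y -> V bs A D (Cadd x y).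
Proof. apply span_add. Qed.

Lemma V_scale bs A D q x : V bs A D x -> V bs A D (Cmul (Qc q) x).
Proof. apply span_scale. Qed.

Lemma V_A bs A D x : Span A x -> V bs A D x.
Proof.
  induction bs; intro H; unfold V; auto.
  apply span_incl with (map (Cmul (Cpow_nat a 0)) (mons bs A D)).
  - intros y Hy. apply in_map_iff in Hy as [u [Hu1 Hu2]]. apply in_mons_cons.
    exists 0%nat, u; repeat split; auto; lia.
  - apply span_eq with (Cmul (Cpow_nat a 0) x). apply span_cmul, IHbs; auto.
    simpl; ring.
Qed.

Lemma V_b bs A b : alg A -> In b bs -> V bs A 1 b.
Proof.
  intros HA; induction bs; intro Hb; [destruct Hb|]. unfold V.
  destruct Hb as [Hb|Hb].
  - subst. apply span_incl with (map (Cmul (Cpow_nat b 1)) (mons bs A 1)).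
    + intros y Hy. apply in_map_iff in Hy as [u [Hu1 Hu2]]. apply in_mons_cons.
      exists 1%nat, u; repeat split; auto; lia.
    + apply span_eq with (Cmul (Cpow_nat b 1) C1). apply span_cmul, V_A. apply HA.
      simpl; ring.
  - apply span_incl with (map (Cmul (Cpow_nat a 0)) (mons bs A 1)).
    + intros y Hy. apply in_map_iff in Hy as [u [Hu1 Hu2]]. apply in_mons_cons.
      exists 0%nat, u; repeat split; auto; lia.
    + apply span_eq with (Cmul (Cpow_nat a 0) b). apply span_cmul, IHbs; auto.
      simpl; ring.
Qed.

Lemma V_pow bs A c x k : alg A -> V bs A c x -> V bs A (c * k) (Cpow_nat x k).
Proof.
  intros HA Hx; induction k; simpl.
  - replace (c * 0)%nat with 0%nat by lia. apply V_A, HA.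
  - replace (c * S k)%nat with (c + c * k)%nat by lia. apply V_mul; auto.
Qed.

Definition Fin bs A x := exists D, V bs A D x.

Lemma Fin_add bs A x y : Fin bs A x -> Fin bs A y -> Fin bs A (Cadd x y).
Proof.
  intros [D1 H1] [D2 H2]; exists (D1 + D2)%nat; apply V_add.
  apply V_mono with D1; auto; lia. apply V_mono with D2; auto; lia.
Qed.
Lemma Fin_mul bs A x y : alg A -> Fin bs A x -> Fin bs A y -> Fin bs A (Cmul x y).
Proof. intros HA [D1 H1] [D2 H2]; exists (D1 + D2)%nat; apply V_mul; auto. Qed.
Lemma Fin_A bs A x : Span A x -> Fin bs A x.
Proof. intros; exists 0%nat; apply V_A; auto. Qed.
Lemma Fin_b bs A b : alg A -> In b bs -> Fin bs A b.
Proof. intros; exists 1%nat; apply V_b; auto. Qed.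
Lemma Fin_Qc bs A q : alg A -> Fin bs A (Qc q).
Proof.
  intros HA; apply Fin_A. apply span_eq with (Cmul (Qc q) C1). apply span_scale, HA.
  unfold Qc, RtoC, C1, Cmul; simpl; f_equal; ring.
Qed.
Lemma Fin_1 bs A : alg A -> Fin bs A C1.
Proof. intros HA; apply Fin_A, HA. Qed.
Lemma Fin_0 bs A : Fin bs A C0.
Proof. exists 0%nat; constructor. Qed.
Lemma Fin_pow bs A x k : alg A -> Fin bs A x -> Fin bs A (Cpow_nat x k).
Proof. intros HA [D H]; exists (D * k)%nat; apply V_pow; auto. Qed.

Lemma Fin_eval bs A p xs : alg A -> Forall (Fin bs A) xs -> Fin bs A (qpoly_eval p xs).
Proof.
  intros HA HF. induction p as [|[q m] p IH]; unfold qpoly_eval; simpl.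
  - apply Fin_0.
  - apply Fin_add; auto. apply Fin_mul; auto. apply Fin_Qc; auto.
    unfold mono_eval. generalize xs HF. clear - HA. induction m; intros [|x xs] HF; simpl; try apply Fin_1; auto.
    inversion HF; subst. apply Fin_mul; auto. apply Fin_pow; auto.
Qed.


Lemma num_bound m n c a : (m < n)%nat -> exists D, ((S (n * (c * D))) ^ m * a < (S D) ^ n)%nat.
Proof.
  intro Hmn. set (K := S (n * c)). exists (K ^ m * a)%nat. set (D := (K ^ m * a)%nat).
  assert (H1 : (S (n * (c * D)) <= K * S D)%nat) by (unfold K; nia).
  assert (H2 : (S (n * (c * D)) ^ m <= K ^ m * S D ^ m)%nat).
  { rewrite <- Nat.pow_mul_l. apply Nat.pow_le_mono_l; auto. }
  assert (H3 : (S D ^ m <= S D ^ (n - 1))%nat) by (apply Nat.pow_le_mono_r; lia).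
  assert (H4 : (S D ^ n = S D * S D ^ (n - 1))%nat).
  { replace n with (S (n - 1)) at 1 by lia. reflexivity. }
  assert (H5 : (1 <= S D ^ (n - 1))%nat).
  { apply Nat.le_trans with (1 ^ (n-1))%nat. rewrite Nat.pow_1_l; lia. apply Nat.pow_le_mono_l; lia. }
  rewrite H4. apply Nat.le_lt_trans with (K ^ m * S D ^ m * a)%nat. nia.
  apply Nat.le_lt_trans with (K ^ m * a * S D ^ (n - 1))%nat. nia.
  unfold D at 2. nia.
Qed.

Fixpoint allvecs (n D : nat) : list (list nat) :=
  match n with
  | O => nil :: nil
  | S n' => flat_map (fun a => map (cons a) (allvecs n' D)) (seq 0 (S D))
  end.

Lemma allvecs_len n D : length (allvecs n D) = (S D ^ n)%nat.
Proof.
  induction n as [|n IH]; [reflexivity|]. cbn [allvecs].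
  rewrite (flat_map_constant_length (c := (S D ^ n)%nat)).
  rewrite length_seq; simpl; lia.
  intros; rewrite length_map; auto.
Qed.

Lemma allvecs_in n D al : In al (allvecs n D) -> length al = n /\ Forall (fun a => a <= D)%nat al.
Proof.
  revert al; induction n as [|n IH]; intros al H; cbn [allvecs] in H.
  - destruct H as [H|[]]; subst; simpl; auto.
  - apply in_flat_map in H as [a [Ha H]]. apply in_map_iff in H as [b [Hb1 Hb2]].
    subst. apply in_seq in Ha. destruct (IH _ Hb2). simpl; split; auto. constructor; auto; lia.
Qed.

Lemma allvecs_nodup n D : NoDup (allvecs n D).
Proof.
  induction n as [|n IH]; cbn [allvecs].
  - constructor; auto. constructor.
  - generalize (seq_NoDup (S D) 0). generalize (seq 0 (S D)). induction l; intro Hl; simpl. constructor.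
    inversion Hl; subst. apply NoDup_app; auto.
    + apply FinFun.Injective_map_NoDup; auto. intros x y E; injection E; auto.
    + intros x Hx1 Hx2. apply in_map_iff in Hx1 as [b [Hb1 Hb2]].
      apply in_flat_map in Hx2 as [a' [Ha' Hx2]]. apply in_map_iff in Hx2 as [b' [Hb1' Hb2']].
      subst. injection Hb1'; intros; subst. contradiction.
Qed.

Lemma map_snd_combine {X Y} (l1 : list X) (l2 : list Y) :
  length l1 = length l2 -> map snd (combine l1 l2) = l2.
Proof. revert l2; induction l1; intros [|b l2] H; simpl in *; try discriminate; auto. rewrite IHl1; auto. Qed.

Lemma in_combine_ex {X Y} (l1 : list X) (l2 : list Y) x :
  length l1 = length l2 -> In x l1 -> exists y, In (x, y) (combine l1 l2).
Proof.
  revert l2; induction l1; intros [|b l2] H Hx; simpl in *; try discriminate; try contradiction.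
  destruct Hx as [Hx|Hx]. subst; eauto. destruct (IHl1 l2) as [y Hy]; auto. eauto.
Qed.

Lemma eval_combine qs als ys B :
  Cmul (qpoly_eval (combine qs als) ys) B =
  lincomb qs (map (fun al => Cmul (mono_eval al ys) B) als).
Proof.
  revert als; induction qs; intros [|al als]; simpl; unfold qpoly_eval, lincomb; simpl; try ring.
  fold (qpoly_eval (combine qs als) ys). fold (lincomb qs (map (fun al => Cmul (mono_eval al ys) B) als)).
  rewrite <- IHqs. unfold Qc. ring.
Qed.

Definition tprop c bs A (t : C * (C * C)) : Prop :=
  let '(y, (u, w)) := t in Cmul y w = u /\ w <> C0 /\ V bs A c u /\ V bs A c w.

Fixpoint Ef (tr : list (C * (C * C))) (al : list nat) (D : nat) : C :=
  match tr, al with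
  | (y, (u, w)) :: tr', a :: al' => Cmul (Cmul (Cpow_nat u a) (Cpow_nat w (D - a))) (Ef tr' al' D)
  | _, _ => C1
  end.

Fixpoint prodw (tr : list (C * (C * C))) (D : nat) : C :=
  match tr with
  | (y, (u, w)) :: tr' => Cmul (Cpow_nat w D) (prodw tr' D)
  | nil => C1
  end.

Lemma prodw_nz c bs A tr D : Forall (tprop c bs A) tr -> prodw tr D <> C0.
Proof.
  induction 1 as [|[y [u w]] tr H HF IH]; simpl.
  - unfold C1, C0; intro E; injection E; lra.
  - intro E; apply Cmul_integral in E as [E|E]; auto. destruct H as [_ [Hw _]].
    apply (Cpow_nz w D Hw E).
Qed.

Lemma Ef_eq c bs A tr al D : Forall (tprop c bs A) tr -> length al = length tr ->
  Forall (fun a => a <= D)%nat al ->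
  Cmul (mono_eval al (map fst tr)) (prodw tr D) = Ef tr al D.
Proof.
  intros HF; revert al; induction HF as [|[y [u w]] tr H HF IH]; intros [|a al] Hl Hal;
    simpl in *; try discriminate.
  - unfold mono_eval; simpl; ring.
  - inversion Hal; subst. destruct H as [Hu _].
    change (mono_eval (a :: al) (y :: map fst tr)) with (Cmul (Cpow_nat y a) (mono_eval al (map fst tr))).
    rewrite <- IH by auto. rewrite <- Hu. rewrite Cpow_mul.
    replace D with (a + (D - a))%nat at 1 by lia. rewrite Cpow_add. ring.
Qed.

Lemma Ef_V c bs A tr al D : alg A -> Forall (tprop c bs A) tr -> Forall (fun a => a <= D)%nat al ->
  V bs A (length tr * (c * D)) (Ef tr al D).
Proof.
  intros HA HF; revert al; induction HF as [|[y [u w]] tr H HF IH]; intros [|a al] Hal; simpl.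
  - apply V_A, HA.
  - apply V_A, HA.
  - apply V_mono with 0%nat; [lia|apply V_A, HA].
  - inversion Hal; subst.
    destruct H as [_ [_ [Hu Hw]]]. apply V_mul; auto.
    eapply V_mono; [|apply V_mul; [auto|apply (V_pow _ _ _ _ a HA Hu)|apply (V_pow _ _ _ _ (D - a) HA Hw)]].
    nia.
Qed.

Lemma get_trips bs A xs ys : alg A -> Forall (Fin bs A) xs -> Forall (in_field_gen xs) ys ->
  exists c tr, map fst tr = ys /\ Forall (tprop c bs A) tr.
Proof.
  intros HA Hx; induction 1 as [|y ys Hy HF IH].
  - exists 0%nat, nil; simpl; auto.
  - destruct IH as [c [tr [H1 H2]]].
    destruct Hy as [P [Qd [_ [_ [HQ HE]]]]].
    destruct (Fin_eval bs A P xs HA Hx) as [D1 HP].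
    destruct (Fin_eval bs A Qd xs HA Hx) as [D2 HQd].
    exists (c + D1 + D2)%nat, ((y, (qpoly_eval P xs, qpoly_eval Qd xs)) :: tr). split; simpl.
    + rewrite H1; auto.
    + constructor. repeat split; [exact HE|exact HQ|apply V_mono with D1; [lia|auto]|apply V_mono with D2; [lia|auto]].
      eapply Forall_impl; [|exact H2]. intros [a [b d]] [? [? [? ?]]]; repeat split; auto;
        apply V_mono with c; auto; lia.
Qed.

Theorem core bs A xs n : alg A -> Forall (Fin bs A) xs -> (length bs < n)%nat -> ~ trdeg_ge xs n.
Proof.
  intros HA Hx Hn [ys [Hlen [Hy Hind]]].
  destruct (get_trips bs A xs ys HA Hx Hy) as [c [tr [Htr HF]]].
  assert (Hltr : length tr = n) by (rewrite <- Hlen, <- Htr, length_map; auto).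
  destruct (num_bound (length bs) n c (length A) Hn) as [D HD].
  set (als := allvecs n D).
  set (vs := map (fun al => Cmul (mono_eval al ys) (prodw tr D)) als).
  assert (Hvs : Forall (Span (mons bs A (n * (c * D)))) vs).
  { apply Forall_forall. intros v Hv. unfold vs in Hv. apply in_map_iff in Hv as [al [Hv Hal]].
    rewrite <- Hv. destruct (allvecs_in _ _ _ Hal) as [H1 H2]. rewrite <- Htr.
    rewrite (Ef_eq c bs A) by (auto; lia). rewrite <- Hltr. apply Ef_V; auto. }
  destruct (dep_main (mons bs A (n * (c * D))) vs ltac:(rewrite mons_len; unfold vs, als; rewrite length_map, allvecs_len; lia) Hvs)
    as [qs [Hq1 [Hq2 Hq3]]].
  assert (Hql : length qs = length als) by (rewrite Hq1; unfold vs; rewrite length_map; auto).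
  apply (Hind (combine qs als)).
  - split.
    + apply Forall_forall. intros [q al] H. apply in_combine_r in H. apply allvecs_in in H.
      simpl; lia.
    + rewrite map_snd_combine by auto. apply allvecs_nodup.
  - apply Exists_exists in Hq2 as [q [Hq Hq0]].
    destruct (in_combine_ex qs als q Hql Hq) as [al Hal]. exists (q, al); auto.
  - pose proof (eval_combine qs als ys (prodw tr D)) as E.
    fold vs in E. rewrite Hq3 in E.
    apply Cmul_integral in E as [E|E]; auto. exfalso; eapply prodw_nz; eauto.
Qed.


Definition pows a d := map (Cpow_nat a) (seq 0 d).

Lemma pows_all a d : Span (pows a d) (Cpow_nat a d) -> forall k, Span (pows a d) (Cpow_nat a k).
Proof.
  intros Hd.
  assert (Hd1 : (1 <= d)%nat).
  { destruct d; [|lia]. simpl in Hd. apply span_nil in Hd. unfold C1, C0 in Hd. injection Hd; lra. }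
  induction k.
  - apply span_in. unfold pows. apply in_map_iff. exists 0%nat; split; auto. apply in_seq; lia.
  - change (Cpow_nat a (S k)) with (Cmul a (Cpow_nat a k)).
    apply span_mul with (a :: nil) (pows a d); auto.
    + intros s t [Hs|[]] Ht. subst. unfold pows in Ht. apply in_map_iff in Ht as [j [Hj1 Hj2]].
      apply in_seq in Hj2. subst. change (Cmul s (Cpow_nat s j)) with (Cpow_nat s (S j)).
      destruct (Nat.eq_dec (S j) d). subst; auto.
      apply span_in. apply in_map_iff. exists (S j); split; auto. apply in_seq; lia.
    + apply span_in; simpl; auto.
Qed.

Lemma pows_alg a d : Span (pows a d) (Cpow_nat a d) -> alg (pows a d).
Proof.
  intros Hd. split. apply (pows_all a d Hd 0).
  intros s t Hs Ht. unfold pows in Hs, Ht.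
  apply in_map_iff in Hs as [i [Hi _]]. apply in_map_iff in Ht as [j [Hj _]]. subst.
  rewrite <- Cpow_add. apply pows_all; auto.
Qed.

Definition prodl (A B : list C) : list C := flat_map (fun s => map (Cmul s) B) A.

Lemma span_prodl A B x y : Span A x -> Span B y -> Span (prodl A B) (Cmul x y).
Proof.
  apply span_mul. intros s t Hs Ht. apply span_in. unfold prodl. apply in_flat_map.
  exists s; split; auto. apply in_map; auto.
Qed.

Lemma prodl_alg A B : alg A -> alg B -> alg (prodl A B).
Proof.
  intros [HA1 HA2] [HB1 HB2]. split.
  - apply span_eq with (Cmul C1 C1). apply span_prodl; auto. ring.
  - intros s t Hs Ht. unfold prodl in Hs, Ht. apply in_flat_map in Hs as [s1 [Hs1 Hs]].
    apply in_flat_map in Ht as [t1 [Ht1 Ht]]. apply in_map_iff in Hs as [s2 [Hs Hs2]].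
    apply in_map_iff in Ht as [t2 [Ht Ht2]]. subst.
    apply span_eq with (Cmul (Cmul s1 t1) (Cmul s2 t2)). apply span_prodl; auto. ring.
Qed.

Lemma prodl_l A B x : alg B -> Span A x -> Span (prodl A B) x.
Proof. intros [HB _] H. apply span_eq with (Cmul x C1). apply span_prodl; auto. ring. Qed.
Lemma prodl_r A B x : alg A -> Span B x -> Span (prodl A B) x.
Proof. intros [HA _] H. apply span_eq with (Cmul C1 x). apply span_prodl; auto. ring. Qed.

Lemma eval_perm p1 p2 xs : Permutation p1 p2 -> qpoly_eval p1 xs = qpoly_eval p2 xs.
Proof.
  induction 1; unfold qpoly_eval in *; simpl; auto.
  - rewrite IHPermutation; auto.
  - ring.
  - congruence.
Qed.

Definition ex1 (t : Q * list nat) : nat := hd 0%nat (snd t).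

Lemma max_ex (p : list (Q * list nat)) : p <> nil -> exists t0, In t0 p /\ forall t, In t p -> (ex1 t <= ex1 t0)%nat.
Proof.
  induction p as [|t p IH]; intro H; [congruence|].
  destruct p as [|t' p].
  - exists t; split; simpl; auto. intros t1 [E|[]]; subst; lia.
  - destruct IH as [t0 [H1 H2]]; [discriminate|].
    destruct (Nat.le_gt_cases (ex1 t) (ex1 t0)).
    + exists t0; split; [right; auto|]. intros t1 [E|E]; subst; auto.
    + exists t; split; [left; auto|]. intros t1 [E|E]; subst; auto.
      specialize (H2 _ E); lia.
Qed.

Lemma wf1_form (t : Q * list nat) : length (snd t) = 1%nat -> snd t = ex1 t :: nil.
Proof. destruct t as [q [|e [|]]]; simpl; intros; try discriminate; auto. Qed.

Lemma eval_low a d p : Forall (fun t => length (snd t) = 1%nat /\ (ex1 t < d)%nat) p ->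
  Span (pows a d) (qpoly_eval p (a :: nil)).
Proof.
  induction 1 as [|t p [H1 H2] HF IH]; unfold qpoly_eval; simpl. constructor.
  apply span_add; auto. fold (Qc (fst t)). apply span_scale.
  rewrite (wf1_form t H1). unfold mono_eval; simpl.
  apply span_eq with (Cpow_nat a (ex1 t)); [|ring].
  apply span_in. apply in_map. apply in_seq; lia.
Qed.

Lemma lead_aux a : forall N p, (length p <= N)%nat -> Forall (fun t => length (snd t) = 1%nat) p ->
  NoDup (map snd p) -> (exists t, In t p /\ ~ (fst t == 0)%Q) -> qpoly_eval p (a :: nil) = C0 ->
  exists d, Span (pows a d) (Cpow_nat a d).
Proof.
  induction N as [|N IH]; intros p Hl Hwf Hnd Hnz He.
  - destruct p; [|simpl in Hl; lia]. destruct Hnz as [t [[] _]].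
  - destruct (max_ex p) as [t0 [Ht0 Hmax]]. { intro; subst; destruct Hnz as [t [[] _]]. }
    apply in_split in Ht0 as [l1 [l2 Hp]]. subst p.
    set (p' := l1 ++ l2).
    assert (Hperm : Permutation (l1 ++ t0 :: l2) (t0 :: p')) by (symmetry; apply Permutation_middle).
    rewrite (eval_perm _ _ _ Hperm) in He.
    assert (Hwf' : Forall (fun t => length (snd t) = 1%nat) (t0 :: p')).
    { eapply Permutation_Forall; eauto. }
    rewrite map_app in Hnd. simpl in Hnd.
    assert (Hnd1 := NoDup_remove_1 _ _ _ Hnd). assert (Hnd2 := NoDup_remove_2 _ _ _ Hnd).
    rewrite <- map_app in Hnd1, Hnd2. fold p' in Hnd1, Hnd2.
    inversion Hwf' as [|? ? Hw0 Hwp]; subst.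
    unfold qpoly_eval in He; simpl in He. fold (qpoly_eval p' (a :: nil)) in He.
    rewrite (wf1_form t0 Hw0) in He. unfold mono_eval in He; simpl in He.
    destruct (classic (fst t0 == 0)%Q) as [Hq0|Hq0].
    + apply (IH p'). unfold p'; rewrite length_app in *; simpl in Hl; lia. auto. auto.
      * destruct Hnz as [t [Ht Htn]]. exists t; split; auto.
        apply in_app_or in Ht as [Ht|[Ht|Ht]]; try (apply in_or_app; auto; fail).
        subst; contradiction.
      * rewrite <- He. unfold Qc in *. rewrite (Qeq_eqR _ _ Hq0). unfold Q2R, RtoC, Cmul, Cadd, Cre, Cim; simpl.
        destruct (qpoly_eval p' (a :: nil)); simpl; f_equal; ring.
    + exists (ex1 t0).
      apply span_eq with (Cmul (Qc (- / fst t0)) (qpoly_eval p' (a :: nil))).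
      * apply span_scale. apply eval_low. apply Forall_forall. intros t Ht.
        pose proof (proj1 (Forall_forall _ _) Hwp) as Hwp'.
        split. apply Hwp'; auto.
        assert (Hne : snd t <> snd t0). { intro E; apply Hnd2; rewrite <- E; apply in_map; auto. }
        assert (Ht' : In t (l1 ++ t0 :: l2)) by (apply in_or_app; apply in_app_or in Ht; simpl; tauto).
        specialize (Hmax t Ht').
        assert (ex1 t <> ex1 t0).
        { assert (Hwt : length (snd t) = 1%nat) by (apply Hwp'; auto).
          intro E; apply Hne. rewrite (wf1_form t Hwt), (wf1_form t0 Hw0), E; auto. }
        lia.
      * assert (E2 : Cadd (Cmul (Qc (fst t0)) (Cmul (Cpow_nat a (ex1 t0)) C1)) (qpoly_eval p' (a :: nil)) = C0)
          by exact He.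
        pose proof (Q2R_nz _ Hq0) as Hr.
        revert E2. unfold Qc. rewrite Q2R_opp, Q2R_inv by auto.
        destruct (Cpow_nat a (ex1 t0)) as [x1 y1], (qpoly_eval p' (a :: nil)) as [x2 y2].
        unfold RtoC, Cmul, Cadd, C0, C1, Cre, Cim; simpl. intro E2; injection E2; intros.
        set (r := Q2R (fst t0)) in *.
        f_equal; [replace x2 with (-(r*x1)) by lra | replace y2 with (-(r*y1)) by lra]; field; auto.
Qed.

Lemma lead a p : qpoly_wf 1 p -> qpoly_nonzero p -> qpoly_eval p (a :: nil) = C0 ->
  exists d, alg (pows a d) /\ Span (pows a d) a.
Proof.
  intros [Hwf Hnd] Hnz He. destruct (lead_aux a (length p) p (le_n _) Hwf Hnd Hnz He) as [d Hd].
  exists d; split. apply pows_alg; auto. apply span_eq with (Cpow_nat a 1). apply pows_all; auto.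
  simpl; ring.
Qed.


Lemma Q2R_zero q : Q2R q = 0 -> (q == 0)%Q.
Proof. intro H; apply eqR_Qeq; rewrite H; unfold Q2R; simpl; ring. Qed.

Lemma lin2 a b : (forall q1 q2, Cadd (Cmul (Qc q1) a) (Cadd (Cmul (Qc q2) b) C0) = C0 ->
  (q1 == 0)%Q /\ (q2 == 0)%Q) -> Q_lin_indep (a :: b :: nil).
Proof.
  intros H qs Hl. destruct qs as [|q1 [|q2 [|]]]; simpl in Hl; try lia.
  intro E. destruct (H q1 q2 E). repeat constructor; auto.
Qed.

Lemma lin3 a b c : (forall q1 q2 q3, Cadd (Cmul (Qc q1) a) (Cadd (Cmul (Qc q2) b) (Cadd (Cmul (Qc q3) c) C0)) = C0 ->
  (q1 == 0)%Q /\ (q2 == 0)%Q /\ (q3 == 0)%Q) -> Q_lin_indep (a :: b :: c :: nil).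
Proof.
  intros H qs Hl. destruct qs as [|q1 [|q2 [|q3 [|]]]]; simpl in Hl; try lia.
  intro E. destruct (H q1 q2 q3 E) as [? [? ?]]. repeat constructor; auto.
Qed.

Lemma Cexp_R x : Cexp (RtoC x) = RtoC (exp x).
Proof. unfold Cexp, RtoC, Cre, Cim; simpl. rewrite cos_0, sin_0. f_equal; ring. Qed.

Lemma Cexp_iPI2 : Cexp (0, PI / 2) = Ci.
Proof. unfold Cexp, Ci, Cre, Cim; simpl. rewrite cos_PI2, sin_PI2, exp_0. f_equal; ring. Qed.

Lemma CLog_i : CLog Ci = (0, PI / 2).
Proof.
  unfold CLog, Cmod, Carg, Ci, Cre, Cim; simpl.
  replace (0 * 0 + 1 * 1) with 1 by ring. rewrite sqrt_1, ln_1. f_equal.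
  destruct (Rlt_dec 0 0); [lra|]. destruct (Rlt_dec 0 0); [lra|].
  destruct (Rlt_dec 0 1); [auto|lra].
Qed.

Lemma sqrt2_pos : 1 < sqrt 2.
Proof. rewrite <- sqrt_1. apply sqrt_lt_1_alt; lra. Qed.

Lemma CLog_sqrt2 : CLog Csqrt2 = RtoC (ln (sqrt 2)).
Proof.
  pose proof sqrt2_pos.
  unfold CLog, Cmod, Carg, Csqrt2, RtoC, Cre, Cim; simpl.
  replace (sqrt 2 * sqrt 2 + 0 * 0) with 2 by (rewrite sqrt_sqrt; lra). f_equal.
  destruct (Rlt_dec 0 (sqrt 2)); [|lra]. unfold Rdiv; rewrite Rmult_0_l, atan_0; auto.
Qed.

Lemma Z_sqrt2 : forall n : nat, forall a b : Z, (Z.to_nat b <= n)%nat -> (0 < b)%Z -> (a * a = 2 * (b * b))%Z -> False.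
Proof.
  induction n; intros a b Hn Hb E. lia.
  assert (Ha : Z.even a = true).
  { assert (Z.even (a * a) = true) by (rewrite E; apply Z.even_even).
    rewrite Z.even_mul in H. destruct (Z.even a); auto. }
  apply Z.even_spec in Ha as [k Hk]. subst a.
  assert (E2 : (b * b = 2 * (k * k))%Z) by lia.
  assert (Hb2 : Z.even b = true).
  { assert (Z.even (b * b) = true) by (rewrite E2; apply Z.even_even).
    rewrite Z.even_mul in H. destruct (Z.even b); auto. }
  apply Z.even_spec in Hb2 as [m Hm]. subst b.
  apply (IHn k m); lia.
Qed.

Lemma sqrt2_irr q : Q2R q <> sqrt 2.
Proof.
  intro H. destruct q as [a b]. unfold Q2R in H; simpl in H.
  assert (Hb : IZR (Z.pos b) <> 0) by (apply not_0_IZR; lia).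
  assert (E : IZR (a * a) = IZR (2 * (Z.pos b * Z.pos b))).
  { rewrite !mult_IZR. replace (IZR a) with (sqrt 2 * IZR (Z.pos b)).
    replace (sqrt 2 * IZR (Z.pos b) * (sqrt 2 * IZR (Z.pos b))) with
      (sqrt 2 * sqrt 2 * (IZR (Z.pos b) * IZR (Z.pos b))) by ring.
    rewrite sqrt_sqrt by lra. simpl; ring.
    rewrite <- H. field; auto. }
  apply eq_IZR in E. apply (Z_sqrt2 (Z.to_nat (Z.pos b)) a (Z.pos b)); auto; lia.
Qed.

Lemma not_transc z : ~ transcendental z -> exists d, alg (pows z d) /\ Span (pows z d) z.
Proof.
  intro H. apply not_all_ex_not in H as [p H].
  apply imply_to_and in H as [H1 H]. apply imply_to_and in H as [H2 H].
  apply NNPP in H. eapply lead; eauto.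
Qed.

Lemma Ci_alg : alg (pows Ci 2).
Proof.
  apply pows_alg. apply span_eq with (Cmul (Qc (- (1))) C1).
  apply span_scale, span_in; simpl; auto.
  unfold Qc, Ci, C1, Cmul, RtoC, Cre, Cim; simpl. rewrite Q2R_opp. unfold Q2R; simpl. unfold Cmul, C1, Cre, Cim; simpl. f_equal; field.
Qed.

Lemma Ci_span : Span (pows Ci 2) Ci.
Proof. apply span_in; simpl. right; left. unfold Ci, C1, Cmul, Cre, Cim; simpl; f_equal; ring. Qed.

Lemma Q2R_half : Q2R (1 # 2) = / 2.
Proof. unfold Q2R; simpl; field. Qed.


Lemma Fin_eq bs A x y : Fin bs A x -> x = y -> Fin bs A y.
Proof. intros; subst; auto. Qed.

Lemma prod0 x y : x * y = 0 -> y <> 0 -> x = 0.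
Proof. intros H Hy. apply Rmult_integral in H as [H|H]; auto; contradiction. Qed.

Lemma cpi_nz c : ~ (c == 0)%Q -> Q2R c * PI <> 0.
Proof. intro Hc. apply Rmult_integral_contrapositive; split. apply Q2R_nz; auto. pose proof PI_RGT_0; lra. Qed.

Lemma i_irr (HS : Schanuel) c : ~ (c == 0)%Q -> forall r, exp (Q2R c * PI) <> Q2R r.
Proof.
  intros Hc r Hr. pose proof PI_RGT_0 as Hpi. pose proof (cpi_nz c Hc) as Hcp.
  set (a1 := (0, PI / 2) : C). set (a2 := RtoC (Q2R c * PI)).
  assert (Hl : Q_lin_indep (a1 :: a2 :: nil)).
  { apply lin2. intros q1 q2 E. unfold a1, a2, Qc, Cmul, Cadd, RtoC, C0, Cre, Cim in E; simpl in E.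
    injection E; intros E1 E2. split; apply Q2R_zero.
    - apply (prod0 _ (PI / 2)); lra.
    - apply (prod0 _ (Q2R c * PI)); auto. lra. }
  apply (core (RtoC PI :: nil) (pows Ci 2) ((a1 :: a2 :: nil) ++ map Cexp (a1 :: a2 :: nil)) 2 Ci_alg); [|simpl; lia|apply (HS _ Hl)].
  simpl. repeat constructor.
  - apply Fin_eq with (Cmul (Qc (1 # 2)) (Cmul Ci (RtoC PI))).
    apply Fin_mul; [apply Ci_alg|apply Fin_Qc, Ci_alg|apply Fin_mul; [apply Ci_alg|apply Fin_A, Ci_span|apply Fin_b; simpl; auto; apply Ci_alg]].
    unfold a1, Qc; rewrite Q2R_half. unfold Cmul, Ci, RtoC, Cre, Cim; simpl; f_equal; field.
  - apply Fin_eq with (Cmul (Qc c) (RtoC PI)).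
    apply Fin_mul; [apply Ci_alg|apply Fin_Qc, Ci_alg|apply Fin_b; simpl; auto; apply Ci_alg].
    unfold a2, Qc, Cmul, RtoC, Cre, Cim; simpl; f_equal; ring.
  - unfold a1. rewrite Cexp_iPI2. apply Fin_A, Ci_span.
  - unfold a2. rewrite Cexp_R, Hr. apply Fin_Qc, Ci_alg.
Qed.

Lemma i_main (HS : Schanuel) c : ~ (c == 0)%Q ->
  transcendental (Cexp (0, exp (Q2R c * PI) * (PI / 2))).
Proof.
  intros Hc. pose proof PI_RGT_0 as Hpi. pose proof (cpi_nz c Hc) as Hcp.
  set (w := exp (Q2R c * PI)). set (z := Cexp (0, w * (PI / 2))).
  apply NNPP; intro Hn. destruct (not_transc _ Hn) as [d [Hd1 Hd2]].
  set (A := prodl (pows Ci 2) (pows z d)).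
  assert (HA : alg A) by (apply prodl_alg; auto; apply Ci_alg).
  set (a1 := (0, PI / 2) : C). set (a2 := RtoC (Q2R c * PI)). set (a3 := (0, w * (PI / 2)) : C).
  assert (Hl : Q_lin_indep (a1 :: a2 :: a3 :: nil)).
  { apply lin3. intros q1 q2 q3 E. unfold a1, a2, a3, Qc, Cmul, Cadd, RtoC, C0, Cre, Cim in E; simpl in E.
    injection E; intros E1 E2.
    assert (H2 : Q2R q2 = 0) by (apply (prod0 _ (Q2R c * PI)); auto; lra).
    assert (H13 : Q2R q1 + Q2R q3 * w = 0) by (apply (prod0 _ (PI / 2)); lra).
    assert (H3 : (q3 == 0)%Q).
    { apply NNPP; intro H3. apply (i_irr HS c Hc (- q1 / q3)).
      fold w. rewrite Q2R_div by auto. rewrite Q2R_opp. pose proof (Q2R_nz _ H3).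
      apply (Rmult_eq_reg_r (Q2R q3)); auto. field_simplify; auto. lra. }
    split; [|split; [apply Q2R_zero; auto|auto]].
    apply Q2R_zero. rewrite (Qeq_eqR _ _ H3) in H13. unfold Q2R at 2 in H13; simpl in H13. lra. }
  apply (core (RtoC PI :: RtoC w :: nil) A ((a1 :: a2 :: a3 :: nil) ++ map Cexp (a1 :: a2 :: a3 :: nil)) 3 HA); [|simpl; lia|apply (HS _ Hl)].
  assert (HiA : Span A Ci) by (apply prodl_l; auto; apply Ci_span).
  simpl. repeat constructor.
  - apply Fin_eq with (Cmul (Qc (1 # 2)) (Cmul Ci (RtoC PI))).
    apply Fin_mul; [auto|apply Fin_Qc; auto|apply Fin_mul; [auto|apply Fin_A; auto|apply Fin_b; simpl; auto]].
    unfold a1, Qc; rewrite Q2R_half. unfold Cmul, Ci, RtoC, Cre, Cim; simpl; f_equal; field.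
  - apply Fin_eq with (Cmul (Qc c) (RtoC PI)).
    apply Fin_mul; [auto|apply Fin_Qc; auto|apply Fin_b; simpl; auto].
    unfold a2, Qc, Cmul, RtoC, Cre, Cim; simpl; f_equal; ring.
  - apply Fin_eq with (Cmul (Qc (1 # 2)) (Cmul Ci (Cmul (RtoC w) (RtoC PI)))).
    apply Fin_mul; [auto|apply Fin_Qc; auto|apply Fin_mul; [auto|apply Fin_A; auto|]].
    apply Fin_mul; [auto|apply Fin_b; simpl; auto|apply Fin_b; simpl; auto].
    unfold a3, Qc; rewrite Q2R_half. unfold Cmul, Ci, RtoC, Cre, Cim; simpl; f_equal; field.
  - unfold a1. rewrite Cexp_iPI2. apply Fin_A; auto.
  - unfold a2. rewrite Cexp_R. apply Fin_b; simpl; auto.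
  - apply Fin_A. apply prodl_r; auto. apply Ci_alg.
Qed.

Lemma Cpow_i_real e : Cpow Ci (RtoC e) = Cexp (0, e * (PI / 2)).
Proof.
  unfold Cpow. rewrite CLog_i. f_equal. unfold Cmul, RtoC, Cre, Cim; simpl; f_equal; ring.
Qed.

Lemma Cpow_i_i : Cpow Ci Ci = RtoC (exp (- (PI / 2))).
Proof.
  unfold Cpow. rewrite CLog_i. rewrite <- Cexp_R. f_equal.
  unfold Cmul, Ci, RtoC, Cre, Cim; simpl; f_equal; ring.
Qed.

Theorem tower_i (HS : Schanuel) : transcendental (Cpow Ci (Cpow Ci Ci)).
Proof.
  rewrite Cpow_i_i, Cpow_i_real.
  replace (- (PI / 2)) with (Q2R (- (1 # 2)) * PI).
  apply i_main; auto. intro H; discriminate H.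
  rewrite Q2R_opp, Q2R_half; field.
Qed.

Theorem i_epi (HS : Schanuel) : transcendental (Cpow Ci (RtoC (exp PI))).
Proof.
  rewrite Cpow_i_real.
  replace PI with (Q2R 1 * PI) at 1.
  apply i_main; auto. intro H; discriminate H.
  unfold Q2R; simpl; field.
Qed.


Definition lg := ln (sqrt 2).
Definition al := exp (sqrt 2 * lg).
Definition be := exp (al * lg).

Lemma lg_pos : 0 < lg.
Proof. unfold lg. rewrite <- ln_1. apply ln_increasing; pose proof sqrt2_pos; lra. Qed.

Lemma RtoC_mul x y : Cmul (RtoC x) (RtoC y) = RtoC (x * y).
Proof. unfold Cmul, RtoC, Cre, Cim; simpl; f_equal; ring. Qed.

Lemma s_alg : alg (pows (RtoC (sqrt 2)) 2).
Proof.
  apply pows_alg. apply span_eq with (Cmul (Qc 2) C1).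
  apply span_scale, span_in; simpl; auto.
  pose proof (sqrt_sqrt 2 ltac:(lra)).
  unfold Qc, C1, Cmul, RtoC, Cre, Cim; simpl. unfold Q2R; simpl.
  unfold Cmul, C1, Cre, Cim; simpl. f_equal; field_simplify; nra.
Qed.

Lemma s_span : Span (pows (RtoC (sqrt 2)) 2) (RtoC (sqrt 2)).
Proof. apply span_in; simpl. right; left. unfold C1, Cmul, RtoC, Cre, Cim; simpl; f_equal; ring. Qed.

Lemma lin_s q1 q2 : Q2R q1 + Q2R q2 * sqrt 2 = 0 -> (q1 == 0)%Q /\ (q2 == 0)%Q.
Proof.
  intro H. assert (H2 : (q2 == 0)%Q).
  { apply NNPP; intro H2. apply (sqrt2_irr (- q1 / q2)). rewrite Q2R_div by auto. rewrite Q2R_opp.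
    pose proof (Q2R_nz _ H2). apply (Rmult_eq_reg_r (Q2R q2)); auto. field_simplify; auto. lra. }
  split; auto. apply Q2R_zero. rewrite (Qeq_eqR _ _ H2) in H. unfold Q2R at 2 in H; simpl in H. lra.
Qed.

Lemma exp_lg : exp lg = sqrt 2.
Proof. unfold lg. apply exp_ln. pose proof sqrt2_pos; lra. Qed.

Lemma al_irr (HS : Schanuel) r1 r2 : al <> Q2R r1 + Q2R r2 * sqrt 2.
Proof.
  intro Hr. pose proof lg_pos.
  set (a1 := RtoC lg). set (a2 := RtoC (sqrt 2 * lg)).
  assert (Hl : Q_lin_indep (a1 :: a2 :: nil)).
  { apply lin2. intros q1 q2 E. unfold a1, a2, Qc, Cmul, Cadd, RtoC, C0, Cre, Cim in E; simpl in E.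
    injection E; intros E1 E2. apply lin_s. apply (prod0 _ lg); lra. }
  apply (core (RtoC lg :: nil) (pows (RtoC (sqrt 2)) 2) ((a1 :: a2 :: nil) ++ map Cexp (a1 :: a2 :: nil)) 2 s_alg);
    [|simpl; lia|apply (HS _ Hl)].
  simpl. repeat constructor.
  - apply Fin_b; simpl; auto. apply s_alg.
  - unfold a2. rewrite <- RtoC_mul. apply Fin_mul; [apply s_alg|apply Fin_A, s_span|apply Fin_b; simpl; auto; apply s_alg].
  - unfold a1. rewrite Cexp_R, exp_lg. apply Fin_A, s_span.
  - unfold a2. rewrite Cexp_R. fold lg al. rewrite Hr.
    apply Fin_eq with (Cadd (Qc r1) (Cmul (Qc r2) (RtoC (sqrt 2)))).
    apply Fin_add. apply Fin_Qc, s_alg. apply Fin_mul; [apply s_alg|apply Fin_Qc, s_alg|apply Fin_A, s_span].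
    unfold Qc, Cadd, Cmul, RtoC, Cre, Cim; simpl; f_equal; ring.
Qed.

Lemma s_main (HS : Schanuel) : transcendental (RtoC be).
Proof.
  pose proof lg_pos.
  apply NNPP; intro Hn. destruct (not_transc _ Hn) as [d [Hd1 Hd2]].
  set (A := prodl (pows (RtoC (sqrt 2)) 2) (pows (RtoC be) d)).
  assert (HA : alg A) by (apply prodl_alg; auto; apply s_alg).
  assert (HsA : Span A (RtoC (sqrt 2))) by (apply prodl_l; auto; apply s_span).
  set (a1 := RtoC lg). set (a2 := RtoC (sqrt 2 * lg)). set (a3 := RtoC (al * lg)).
  assert (Hl : Q_lin_indep (a1 :: a2 :: a3 :: nil)).
  { apply lin3. intros q1 q2 q3 E. unfold a1, a2, a3, Qc, Cmul, Cadd, RtoC, C0, Cre, Cim in E; simpl in E.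
    injection E; intros E1 E2.
    assert (H123 : Q2R q1 + Q2R q2 * sqrt 2 + Q2R q3 * al = 0) by (apply (prod0 _ lg); lra).
    assert (H3 : (q3 == 0)%Q).
    { apply NNPP; intro H3. apply (al_irr HS (- q1 / q3) (- q2 / q3)).
      rewrite !Q2R_div by auto. rewrite !Q2R_opp. pose proof (Q2R_nz _ H3).
      apply (Rmult_eq_reg_r (Q2R q3)); auto. field_simplify; auto. lra. }
    rewrite (Qeq_eqR _ _ H3) in H123. unfold Q2R at 3 in H123; simpl in H123.
    destruct (lin_s q1 q2) as [? ?]; [lra|]. auto. }
  apply (core (RtoC lg :: RtoC al :: nil) A ((a1 :: a2 :: a3 :: nil) ++ map Cexp (a1 :: a2 :: a3 :: nil)) 3 HA);
    [|simpl; lia|apply (HS _ Hl)].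
  simpl. repeat constructor.
  - apply Fin_b; simpl; auto.
  - unfold a2. rewrite <- RtoC_mul. apply Fin_mul; [auto|apply Fin_A; auto|apply Fin_b; simpl; auto].
  - unfold a3. rewrite <- RtoC_mul. apply Fin_mul; [auto|apply Fin_b; simpl; auto|apply Fin_b; simpl; auto].
  - unfold a1. rewrite Cexp_R, exp_lg. apply Fin_A; auto.
  - unfold a2. rewrite Cexp_R. apply Fin_b; simpl; auto.
  - unfold a3. rewrite Cexp_R. apply Fin_A. apply prodl_r; auto. apply s_alg.
Qed.

Theorem tower_s (HS : Schanuel) : transcendental (Cpow Csqrt2 (Cpow Csqrt2 Csqrt2)).
Proof.
  assert (E1 : Cpow Csqrt2 Csqrt2 = RtoC al).
  { unfold Cpow. rewrite CLog_sqrt2. unfold Csqrt2. rewrite RtoC_mul, Cexp_R. reflexivity. }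
  rewrite E1. unfold Cpow. rewrite CLog_sqrt2. rewrite RtoC_mul, Cexp_R. apply s_main; auto.
Qed.

Theorem mainTheorem4 :
  Schanuel ->
  transcendental (Cpow Csqrt2 (Cpow Csqrt2 Csqrt2)) /\
  transcendental (Cpow Ci (Cpow Ci Ci)) /\
  transcendental (Cpow Ci (RtoC (exp PI))).
Proof.
  intro HS. split; [apply tower_s; auto|split; [apply tower_i; auto|apply i_epi; auto]].
Qed.
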